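(* Let $p,q\ge 3$. If there exists a $p$-core of type $(x_1,\dots,x_p)$ and a $q$-core of type $(y_1,\dots,y_q)$, then there exists a $(p+q-1)$-core of type $(x_1,\dots,x_{p-1},x_p+y_1,y_2,\dots,y_q)$.
   Context: For $p\ge 3$, a $p$-core of type $(x_1,\dots,x_p)$ consists of pairwise disjoint finite sets $C_1,\dots,C_p$ (the classes) with $|C_i|=x_i$, together with sets $B_1,\dots,B_p\subseteq C_1\cup\dots\cup C_p$ such that $B_1\cup\dots\cup B_p=C_1\cup\dots\cup C_p$, and: (i) $B_i\cap C_i=\emptyset$ and $|B_i\cap C_j|=1$ for all $j\ne i$ (so $|B_i|=p-1$); (ii) $|B_i\cap B_j|+p$ is odd for all $1\le i,j\le p$. *)

(* Defs.v *)
From mathcomp Require Import all_boot.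
Set Implicit Arguments. Unset Strict Implicit. Unset Printing Implicit Defensive.

(* A p-core of type (x_0, ..., x_{p-1}) (0-indexed; x : nat -> nat, only the
   values x 0, ..., x (p-1) matter) with ground elements in a finite type T:
   classes C i and sets B i indexed by 'I_p. *)
Definition is_core (T : finType) (p : nat) (x : nat -> nat)
  (C B : 'I_p -> {set T}) : Prop :=
  [/\ (forall i j : 'I_p, i != j -> [disjoint C i & C j]),
      (forall i : 'I_p, #|C i| = x (val i)),
      (\bigcup_(i < p) B i = \bigcup_(i < p) C i),
      (forall i : 'I_p, B i :&: C i = set0) &
      (forall i j : 'I_p, i != j -> #|B i :&: C j| = 1)] /\
  (forall i j : 'I_p, odd (#|B i :&: B j| + p)).

Definition core_exists (p : nat) (x : nat -> nat) : Prop :=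
  exists (T : finType) (C B : 'I_p -> {set T}), @is_core T p x C B.

Definition glue_type (p : nat) (x y : nat -> nat) (k : nat) : nat :=
  if k < p.-1 then x k
  else if k == p.-1 then x p.-1 + y 0
  else y (k - p.-1).

(* Main.v *)
Require Import Defs.
From mathcomp Require Import all_boot zify.
Set Implicit Arguments. Unset Strict Implicit. Unset Printing Implicit Defensive.

Section Sum.
Variables T1 T2 : finType.
Definition sumset (X : {set T1}) (Y : {set T2}) : {set T1 + T2} :=
  [set z | match z with inl a => a \in X | inr b => b \in Y end].

Lemma sumsetI X Y X' Y' : sumset X Y :&: sumset X' Y' = sumset (X :&: X') (Y :&: Y').
Proof. by apply/setP => -[a|b]; rewrite !inE. Qed.

Lemma card_sumset X Y : #|sumset X Y| = #|X| + #|Y|.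
Proof.
rewrite -!sum1_card big_mkcond big_sumType /=.
rewrite [\sum_(i in X) 1]big_mkcond [\sum_(i in Y) 1]big_mkcond /=.
by congr (_ + _); apply: eq_bigr => i _; rewrite inE.
Qed.
End Sum.

Section Glue.
Variables (T1 T2 : finType) (m n : nat) (x y : nat -> nat).
Variables (C B : 'I_m.+1 -> {set T1}) (D E : 'I_n.+1 -> {set T2}).
Hypothesis HC : is_core x C B.
Hypothesis HD : is_core y D E.

Local Notation N := (m.+1 + n.+1 - 1).
Definition CX (a : nat) := if a <= m then C (inord a) else set0.
Definition DY (a : nat) := if m <= a then D (inord (a - m)) else set0.
Definition C' (a : 'I_N) := sumset (CX a) (DY a).
Definition B' (a : 'I_N) := sumset (B (inord (minn a m))) (E (inord (a - m))).

Lemma inordE k l (hk : k <= m) (hl : l <= m) :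
  ((inord k : 'I_m.+1) == inord l) = (k == l).
Proof.
apply/eqP/eqP => [h|->//]; have := congr1 (@nat_of_ord _) h; rewrite !inordK //; lia.
Qed.

Lemma inordE' k l (hk : k <= n) (hl : l <= n) :
  ((inord k : 'I_n.+1) == inord l) = (k == l).
Proof.
apply/eqP/eqP => [h|->//]; have := congr1 (@nat_of_ord _) h; rewrite !inordK //; lia.
Qed.

Lemma cardBC i j : #|B i :&: C j| = (i != j).
Proof.
case: HC => [[_ _ _ h0 h1] _]; case: eqP => [->|/eqP h]; first by rewrite h0 cards0.
by rewrite h1.
Qed.

Lemma cardED i j : #|E i :&: D j| = (i != j).
Proof.
case: HD => [[_ _ _ h0 h1] _]; case: eqP => [->|/eqP h]; first by rewrite h0 cards0.
by rewrite h1.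
Qed.

Lemma cardB'C' (a b : 'I_N) : #|B' a :&: C' b| =
  (if b <= m then (minn a m != b) : nat else 0) + (if m <= b then (a - m != b - m) : nat else 0).
Proof.
have ha := ltn_ord a; have hb := ltn_ord b.
rewrite /B' /C' sumsetI card_sumset /CX /DY.
congr (_ + _); case: ifP => h; rewrite ?setI0 ?cards0 //.
  by rewrite cardBC inordE //; lia.
by rewrite cardED inordE' //;  lia.
Qed.

Lemma glue_core : is_core (glue_type m.+1 x y) C' B'.
Proof.
case: HC => [[hCd hCc hCu hCB hC1] hCp].
case: HD => [[hDd hDc hDu hDB hD1] hDp].
split; first split.
- move=> a b hab; rewrite -setI_eq0 -cards_eq0 /C' sumsetI card_sumset /CX /DY.
  have ha := ltn_ord a; have hb := ltn_ord b.
  have hab' : (a : nat) != b by [].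
  rewrite addn_eq0; apply/andP; split.
    case: ifP => h1; case: ifP => h2; rewrite ?set0I ?setI0 ?cards0 //.
    by rewrite cards_eq0 setI_eq0 hCd // inordE.
  case: ifP => h1; case: ifP => h2; rewrite ?set0I ?setI0 ?cards0 //.
  by rewrite cards_eq0 setI_eq0 hDd // inordE' //; lia.
- move=> a; have ha := ltn_ord a.
  rewrite /C' card_sumset /CX /DY /glue_type /=.
  case: (ltngtP a m) => h.
  + by rewrite cards0 addn0 hCc /= inordK //; lia.
  + by rewrite cards0 hDc /= inordK //; lia.
  + by rewrite h subnn hCc hDc /= !inordK.
- apply/setP => -[t|t]; apply/bigcupP/bigcupP => -[a _].
  + rewrite /B' inE => ht.
    have : t \in \bigcup_i C i by rewrite -hCu; apply/bigcupP; exists (inord (minn a m)).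
    case/bigcupP => i _ hi.
    have hi' : (i : nat) < N by have := ltn_ord i; lia.
    exists (Ordinal hi') => //; rewrite /C' /CX inE /= -ltnS ltn_ord inord_val //.
  + rewrite /C' /CX inE; case: ifP => hm; last by rewrite inE.
    move=> ht.
    have : t \in \bigcup_i B i by rewrite hCu; apply/bigcupP; exists (inord a).
    case/bigcupP => i _ hi.
    have hi' : (i : nat) < N by have := ltn_ord i; lia.
    exists (Ordinal hi') => //; rewrite /B' inE /=.
    by rewrite (minn_idPl _) ?inord_val // -ltnS ltn_ord.
  + rewrite /B' inE => ht.
    have : t \in \bigcup_i D i by rewrite -hDu; apply/bigcupP; exists (inord (a - m)).
    case/bigcupP => i _ hi.
    have hi' : (i + m : nat) < N by have := ltn_ord i; lia.
    exists (Ordinal hi') => //; rewrite /C' /DY inE /= leq_addl addnK inord_val //.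
  + rewrite /C' /DY inE; case: ifP => hm; last by rewrite inE.
    move=> ht.
    have : t \in \bigcup_i E i by rewrite hDu; apply/bigcupP; exists (inord (a - m)).
    case/bigcupP => i _ hi.
    have hi' : (i + m : nat) < N by have := ltn_ord i; lia.
    exists (Ordinal hi') => //; rewrite /B' inE /= addnK inord_val //.
- move=> a; apply/eqP; rewrite -cards_eq0 cardB'C'.
  have ha := ltn_ord a.
  case: ifP => h1; case: ifP => h2 /=; rewrite ?eqxx ?addn0 //.
  + by rewrite (minn_idPl h1) eqxx.
  + by rewrite (minn_idPl h1) eqxx.
- move=> a b hab; rewrite cardB'C'.
  have ha := ltn_ord a; have hb := ltn_ord b.
  have hab' : (a : nat) != b by [].
  case: ifP => h1; case: ifP => h2 /=; repeat case: eqP; move=> /= *; lia.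
- move=> a b; rewrite /B' sumsetI card_sumset.
  have := hCp (inord (minn a m)) (inord (minn b m)).
  have := hDp (inord (a - m)) (inord (b - m)).
  move: (#|_ :&: _|) (#|_ :&: _|) => u v.
  rewrite (_ : N = (m + n).+1); last by lia.
  rewrite !oddD /= !oddD.
  by case: (odd u); case: (odd v); case: (odd m); case: (odd n) => //=.
Qed.
End Glue.

Theorem lemma3p4 (p q : nat) (x y : nat -> nat) :
  3 <= p -> 3 <= q ->
  core_exists p x -> core_exists q y ->
  core_exists (p + q - 1) (glue_type p x y).
Proof.
case: p => // m _; case: q => // n _.
move=> [T1 [C [B hC]]] [T2 [D [E hD]]].
exists (T1 + T2)%type, (C' C D), (B' B E).
exact: glue_core.
Qed.
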